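(* Let $a<b$, $M$ an even positive integer, $h=(b-a)/M$, $\tau>0$, $0<\varepsilon\le1$, and let $V^0,A_1^0$ be real constants. For $l=-M/2,\dots,M/2-1$ let $\mu_l=2l\pi/(b-a)$. Consider the leap-frog finite difference (LFFD) scheme with constant potentials $V\equiv V^0$, $A_1\equiv A_1^0$ described in the context, and its von Neumann amplification factors: for each $l$, the complex numbers $\xi$ satisfying $$\det\Big[(\xi^2-1)I_2+2i\tau\xi\Big(\frac{\sigma_3}{\varepsilon}+V^0I_2-A_1^0\sigma_1+\frac{\sin(\mu_lh)}{\varepsilon h}\sigma_1\Big)\Big]=0.$$ If $$0<\tau\le\frac{\varepsilon h}{|V^0|\varepsilon h+\sqrt{h^2+(|A_1^0|\varepsilon h+1)^2}},$$ then every such amplification factor satisfies $|\xi|\le1$ for every $l=-M/2,\dots,M/2-1$, i.e. the LFFD scheme is linearly (von Neumann) stable.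
   Context: Pauli matrices: $\sigma_1=\begin{pmatrix}0&1\\1&0\end{pmatrix}$, $\sigma_3=\begin{pmatrix}1&0\\0&-1\end{pmatrix}$; $I_2$ the $2\times2$ identity. Grid: $x_j=a+jh$, $t_n=n\tau$, periodic convention $\varPhi^n_M=\varPhi^n_0$, $\varPhi^n_{-1}=\varPhi^n_{M-1}$, $\varPhi^n_{M+1}=\varPhi^n_1$; $\delta_t\varPhi^n_j=(\varPhi^{n+1}_j-\varPhi^{n-1}_j)/(2\tau)$, $\delta_x\varPhi^n_j=(\varPhi^n_{j+1}-\varPhi^n_{j-1})/(2h)$. The LFFD scheme with constant potentials is, for $n\ge1$, $j=0,\dots,M-1$, $$i\delta_t\varPhi^n_j=\frac1\varepsilon(-i\sigma_1\delta_x+\sigma_3)\varPhi^n_j+(V^0I_2-A_1^0\sigma_1)\varPhi^n_j.$$ The amplification factors arise by substituting $\varPhi^n_j=\sum_{l}\xi_l^n\widehat{\varPhi}_l e^{2ijl\pi/M}$ (with $\widehat{\varPhi}_l\in\mathbb{C}^2$) into the scheme. *)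

(* Defs.v *)
From HB Require Import structures.
From mathcomp Require Import all_boot all_order all_algebra.
From mathcomp Require Import all_classical all_reals all_analysis.
From mathcomp Require Import complex.
Set Implicit Arguments. Unset Strict Implicit. Unset Printing Implicit Defensive.
Import Order.TTheory GRing.Theory Num.Theory.
Local Open Scope ring_scope.
Local Open Scope complex_scope.

Definition sigma1 (R : rcfType) : 'M[R[i]]_2 :=
  \matrix_(j < 2, k < 2) (if j == k then 0 else 1).
Definition sigma3 (R : rcfType) : 'M[R[i]]_2 :=
  \matrix_(j < 2, k < 2) (if j == k then (if j == 0 then 1 else -1) else 0).

Definition LFFD_symbol (R : realType) (tau eps h V0 A10 mu : R) (xi : R[i]) : 'M[R[i]]_2 :=
  (xi ^+ 2 - 1)%:M
  + (2 * 'i * tau%:C * xi) *: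
      ((eps^-1)%:C *: sigma3 R + (V0%:C)%:M - A10%:C *: sigma1 R
       + ((sin (mu * h) / (eps * h))%:C) *: sigma1 R).

Definition amplification_factor (R : realType) (tau eps h V0 A10 mu : R) (xi : R[i]) : Prop :=
  \det (LFFD_symbol tau eps h V0 A10 mu xi) = 0.

(* Main.v *)
Require Import Defs.
From HB Require Import structures.
From mathcomp Require Import all_boot all_order all_algebra.
From mathcomp Require Import all_classical all_reals all_analysis.
From mathcomp Require Import complex.
From mathcomp Require Import ring lra.
Import Order.TTheory GRing.Theory Num.Theory.
Local Open Scope ring_scope.
Local Open Scope complex_scope.

Lemma det22 (F : comNzRingType) (A : 'M[F]_2) : \det A = A 0 0 * A 1 1 - A 0 1 * A 1 0.
Proof.
rewrite (expand_det_row _ ord0) !big_ord_recl big_ord0 /cofactor.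
rewrite !det_mx11 /= !mxE /= expr0 expr1 addr0 !mul1r mulN1r mulrN.
have E1 : lift ord0 (0:'I_1) = 1 :> 'I_2 by apply: val_inj.
have E3 : lift (lift ord0 ord0) (0:'I_1) = 0 :> 'I_2 by apply: val_inj.
by rewrite E3 E1.
Qed.

Lemma eq_by {F : comNzRingType} {E A B : F} : E = 0 -> A - B = E -> A = B.
Proof. by move=> h; rewrite h => /eqP; rewrite subr_eq0 => /eqP. Qed.

Lemma quad_norm (R : rcfType) (t : R) (xi : R[i]) : `|t| <= 1 ->
  xi ^+ 2 - 1 + 2 * 'i * t%:C * xi = 0 -> `|xi| <= 1.
Proof.
move=> ht; case: xi => x y /eqP; rewrite eq_complex /= => /andP[/eqP h1' /eqP h2'].
rewrite normc_def /= -[1]/(1%:C) lecR.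
have h1 : x ^+ 2 - y ^+ 2 - 1 - 2 * t * y = 0 by  apply: (eq_by h1'); ring.
have h2 : x * (y + t) = 0.
  have : 2 * (x * (y + t)) = 0 by apply: (eq_by h2'); ring.
  by move/eqP; rewrite mulf_eq0 pnatr_eq0 /= => /eqP.
have /ler_normlP [ht1 ht2] := ht.
have hx : x ^+ 2 + y ^+ 2 <= 1.
  move/eqP: h2; rewrite mulf_eq0 => /orP[/eqP x0|/eqP yt].
    subst x.
    have e : t ^+ 2 - 1 = (y + t) ^+ 2 by apply: (eq_by h1); ring.
    have : (y + t) ^+ 2 = 0 by apply/eqP; rewrite eq_le sqr_ge0 andbT -e; nra.
    move/eqP; rewrite sqrf_eq0 addr_eq0 => /eqP ->.
    nra.
  have -> : y = - t by apply: (eq_by yt); ring.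
  nra.
by rewrite -sqrtr1 ler_sqrt // ltr01.
Qed.

Lemma det_sym (R : realType) (tau eps h V0 A10 mu : R) (xi : R[i]) :
  \det (LFFD_symbol tau eps h V0 A10 mu xi) =
  (xi ^+ 2 - 1 + 2 * 'i * tau%:C * xi * V0%:C) ^+ 2 - (2 * 'i * tau%:C * xi) ^+ 2 *
   ((eps^-1)%:C ^+ 2 + ((sin (mu * h) / (eps * h))%:C - A10%:C) ^+ 2).
Proof.
rewrite det22 /LFFD_symbol /sigma1 /sigma3 !mxE /=.
ring.
Qed.

Theorem lemma4 (R : realType) (a b : R) (M : nat) (tau eps V0 A10 : R) :
  a < b -> (0 < M)%N -> ~~ odd M ->
  let h := (b - a) / M%:R in
  0 < tau -> 0 < eps -> eps <= 1 ->
  tau <= (eps * h) /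
         (`|V0| * eps * h + Num.sqrt (h ^+ 2 + (`|A10| * eps * h + 1) ^+ 2)) ->
  forall (l : int), - (M./2)%:Z <= l < (M./2)%:Z ->
  let mu := 2 * l%:~R * pi / (b - a) in
  forall xi : R[i], amplification_factor tau eps h V0 A10 mu xi ->
  `|xi| <= 1.
Proof.
move=> hab hM _ h htau heps _ htb l _ mu xi.
rewrite /amplification_factor det_sym => hdet.
have hh : 0 < h by rewrite /h divr_gt0 ?subr_gt0 // ltr0n.
set k := eps * h.
have hk : 0 < k by rewrite /k mulr_gt0.
set s := sin (mu * h).
set cr := s / k - A10.
set S := Num.sqrt (h ^+ 2 + (`|A10| * eps * h + 1) ^+ 2).
have hS : 0 < S by rewrite sqrtr_gt0; have := sqr_ge0 (`|A10| * eps * h + 1); have := exprn_gt0 2 hh; lra.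
set d := Num.sqrt (eps^-1 ^+ 2 + cr ^+ 2).
have hd0 : 0 <= d by apply: sqrtr_ge0.
have hd2 : d ^+ 2 = eps^-1 ^+ 2 + cr ^+ 2 by rewrite sqr_sqrtr // addr_ge0 // sqr_ge0.
have hs : `|s| <= 1 by apply: sin_max.
have hkd : k * d <= S.
  have e1 : (k * d) ^+ 2 = h ^+ 2 + (s - A10 * k) ^+ 2.
    by rewrite exprMn hd2 /cr /k; field; rewrite (gt_eqF hh) (gt_eqF heps).
  have e2 : S ^+ 2 = h ^+ 2 + (`|A10| * eps * h + 1) ^+ 2 by rewrite sqr_sqrtr // addr_ge0 // sqr_ge0.
  have e3 : `|s - A10 * k| <= `|A10| * eps * h + 1.
    apply: (le_trans (ler_normB _ _)); rewrite normrM (gtr0_norm hk) /k; nra.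
  have e4 : (s - A10 * k) ^+ 2 <= (`|A10| * eps * h + 1) ^+ 2.
    rewrite -real_normK ?num_real //; have := normr_ge0 (s - A10 * k); nra.
  have hkd0 : 0 <= k * d by rewrite mulr_ge0 // ltW.
  nra.
have hVk : 0 <= `|V0| * eps * h by apply: mulr_ge0; [apply: mulr_ge0|]; rewrite ?normr_ge0 ?ltW.
have hden : 0 < `|V0| * eps * h + S by lra.
have htd : tau * (`|V0| + d) <= 1.
  move: htb; rewrite ler_pdivlMr // => htb.
  have ek : `|V0| * eps * h = `|V0| * k by rewrite /k; ring.
  rewrite -/S -/k ek in htb; have := ler_wpM2l (ltW htau) hkd => h1.
  have h2 : tau * (`|V0| + d) * k <= k by nra.
  by rewrite -(ler_pM2r hk) mul1r.
have key : forall t : R, `|t| <= 1 -> xi ^+ 2 - 1 + 2 * 'i * t%:C * xi = 0 -> `|xi| <= 1.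
  by move=> t; apply: quad_norm.
have /andP[hV1 hV2] : -`|V0| <= V0 <= `|V0| by rewrite -ler_norml.
have : (xi ^+ 2 - 1 + 2 * 'i * tau%:C * xi * (V0 - d)%:C) *
       (xi ^+ 2 - 1 + 2 * 'i * tau%:C * xi * (V0 + d)%:C) = 0.
  apply: (eq_by hdet).
  rewrite rmorphB rmorphD /= -/s -/k.
  have -> : (eps^-1)%:C ^+ 2 + ((s / k)%:C - A10%:C) ^+ 2 = (d%:C) ^+ 2.
    by rewrite -rmorphB -!rmorphXn -rmorphD /= hd2.
  ring.
move/eqP; rewrite mulf_eq0 => /orP[/eqP H|/eqP H].
  apply: (key (tau * (V0 - d))).
    rewrite normrM (gtr0_norm htau).
    have hn : `|V0 - d| <= `|V0| + d by rewrite ler_norml; lra.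
    have := ler_wpM2l (ltW htau) hn; lra.
  by apply: (eq_by H); rewrite rmorphM /=; ring.
apply: (key (tau * (V0 + d))).
  rewrite normrM (gtr0_norm htau).
    have hn : `|V0 + d| <= `|V0| + d by rewrite ler_norml; lra.
    have := ler_wpM2l (ltW htau) hn; lra.
by apply: (eq_by H); rewrite rmorphM /=; ring.
Qed.
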